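(* $e(\lambda)\to 0$ from below as $\lambda\to\infty$, i.e. $e(\lambda)\to 0^-$.
   Context: Standing setup. Let $\gamma>0$; let $a_1,\dots,a_p>0$ with weights $\omega_i>0$, $\sum_i\omega_i=1$, and $b_1,\dots,b_n>0$ with weights $\pi_j>0$, $\sum_j\pi_j=1$. Let $\mu$ be the limiting spectral distribution of $\mathbf{N}\mathbf{N}^T$ where $\mathbf{N}=\mathbf{A}^{1/2}\mathbf{G}\mathbf{B}^{1/2}$ is $k\times l$, $\mathbf{G}$ has iid mean-zero entries of variance $1/l$, $k/l\to\gamma$, and the spectral distributions of $\mathbf{A},\mathbf{B}$ converge to $\nu=\sum_i\omega_i\delta_{a_i}$ and $\underline{\nu}=\sum_j\pi_j\delta_{b_j}$. $\mu$ is a compactly supported probability measure on $[0,\infty)$; $\lambda^*>0$ is the right endpoint of its support, and $s(\lambda)=\int\frac{d\mu(t)}{t-\lambda}$ for $\lambda>\lambda^*$. Define $G(e)=\sum_{j=1}^n\frac{b_j\pi_j}{1+\gamma b_j e}$. It is known (master equations) that there is a continuous (indeed smooth) real function $e(\lambda)$ on $(\lambda^*,\infty)$, never equal to a pole $-1/(\gamma b_j)$ of $G$ and with $a_iG(e(\lambda))\ne\lambda$, satisfying $s(\lambda)=\sum_{i=1}^p\frac{\omega_i}{a_iG(e(\lambda))-\lambda}$ and $e(\lambda)=\sum_{i=1}^p\frac{a_i\omega_i}{a_iG(e(\lambda))-\lambda}$. *)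

(* Defs.v *)
From Stdlib Require Import Reals Lra.
Open Scope R_scope.

Fixpoint rsum (n : nat) (f : nat -> R) : R :=
  match n with
  | O => 0
  | S k => rsum k f + f k
  end.

(* A compactly supported probability measure mu on [0, oo) is represented by
   its distribution function F (F t = mu((-oo, t])).  [is_cdf_endpoint F ls]
   says F is such a distribution function and ls is the right endpoint of the
   support of mu. *)
Definition is_cdf_endpoint (F : R -> R) (ls : R) : Prop :=
  (forall t u, t <= u -> F t <= F u) /\
  (forall t eps, 0 < eps -> exists delta, 0 < delta /\
       forall u, t <= u < t + delta -> F u - F t < eps) /\
  (forall t, t < 0 -> F t = 0) /\
  (forall t, ls <= t -> F t = 1) /\
  (forall t, t < ls -> F t < 1).

Definition RS_sum (F g : R -> R) (lo hi : R) (n : nat) : R :=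
  let h := (hi - lo) / INR n in
  rsum n (fun k => g (lo + INR k * h) *
                   (F (lo + INR (S k) * h) - F (lo + INR k * h))).

(* [stieltjes F ls lam v]: v = \int dmu(t) / (t - lam) (for lam > ls); the
   integrand is continuous on [-1, ls] which contains supp mu, so the
   Riemann-Stieltjes sums over [-1, ls] converge to the integral. *)
Definition stieltjes (F : R -> R) (ls lam v : R) : Prop :=
  Un_cv (fun n => RS_sum F (fun t => / (t - lam)) (-1) ls (S n)) v.

Definition Gfun (gamma : R) (n : nat) (b pi : nat -> R) (e : R) : R :=
  rsum n (fun j => b j * pi j / (1 + gamma * b j * e)).

(* Main.v *)
Require Import Defs.
From Stdlib Require Import Reals.
From Stdlib Require Import Lra Lia.
Open Scope R_scope.

Lemma rsum_ext n f g : (forall i, (i<n)%nat -> f i = g i) -> rsum n f = rsum n g.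
Proof. induction n; simpl; intros H; [reflexivity|].
 rewrite IHn by (intros; apply H; lia). rewrite H by lia. reflexivity. Qed.

Lemma rsum_plus n f g : rsum n (fun i => f i + g i) = rsum n f + rsum n g.
Proof. induction n; simpl; [lra|]. rewrite IHn. lra. Qed.

Lemma rsum_scal n c f : rsum n (fun i => c * f i) = c * rsum n f.
Proof. induction n; simpl; [lra|]. rewrite IHn. lra. Qed.

Lemma rsum_le n f g : (forall i, (i<n)%nat -> f i <= g i) -> rsum n f <= rsum n g.
Proof. induction n; simpl; intros H; [lra|].
 assert (rsum n f <= rsum n g) by (apply IHn; intros; apply H; lia).
 assert (f n <= g n) by (apply H; lia). lra. Qed.

Lemma rsum_zero n : rsum n (fun _ => 0) = 0.
Proof. induction n; simpl; [lra|]. rewrite IHn. lra. Qed.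

Lemma rsum_neg n f : (0<n)%nat -> (forall i, (i<n)%nat -> f i < 0) -> rsum n f < 0.
Proof. intros Hn H. destruct n as [|n]; [lia|]. simpl.
 assert (rsum n f <= rsum n (fun _ => 0)) by (apply rsum_le; intros; left; apply H; lia).
 rewrite rsum_zero in H0. assert (f n < 0) by (apply H; lia). lra. Qed.

Lemma rsum_pos n f : (0<n)%nat -> (forall i, (i<n)%nat -> 0 < f i) -> 0 < rsum n f.
Proof. intros Hn H. assert (rsum n (fun i => - f i) < 0).
 apply rsum_neg; auto. intros i Hi; specialize (H i Hi); lra.
 replace (rsum n (fun i => - f i)) with (-1 * rsum n f) in H0. lra.
 rewrite <- rsum_scal. apply rsum_ext. intros; lra. Qed.

Lemma rsum_term n f k : (forall i, (i<n)%nat -> 0 <= f i) -> (k<n)%nat -> f k <= rsum n f.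
Proof. induction n; intros H Hk; [lia|]. simpl.
 assert (0 <= rsum n f).
 { rewrite <- (rsum_zero n). apply rsum_le. intros; apply H; lia. }
 destruct (Nat.eq_dec k n). subst. lra.
 assert (f k <= rsum n f) by (apply IHn; [intros; apply H; lia | lia]).
 assert (0 <= f n) by (apply H; lia). lra. Qed.

Lemma rsum_tele n u : rsum n (fun k => u (S k) - u k) = u n - u O.
Proof. induction n; simpl; [lra|]. rewrite IHn. lra. Qed.

Lemma RS_bounds F ls lam c C m :
  (forall t u, t <= u -> F t <= F u) -> F (-1) = 0 -> F ls = 1 -> 0 < ls ->
  (forall x, -1 <= x <= ls -> c <= / (x - lam) <= C) ->
  c <= RS_sum F (fun t => /(t-lam)) (-1) ls (S m) <= C.
Proof.
 intros Hm F0 F1 Hls Hb. unfold RS_sum. cbv zeta.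
 set (h := (ls - -1) / INR (S m)).
 assert (HS : 0 < INR (S m)) by (apply lt_0_INR; lia).
 assert (Hh : 0 < h) by (unfold h; apply Rdiv_lt_0_compat; lra).
 set (x := fun k => -1 + INR k * h).
 assert (Hd : forall k, 0 <= F (x (S k)) - F (x k)).
 { intro k. assert (x k <= x (S k)). unfold x. rewrite S_INR. nra.
   specialize (Hm _ _ H). lra. }
 assert (Htot : rsum (S m) (fun k => F (x (S k)) - F (x k)) = 1).
 { rewrite (rsum_tele (S m) (fun k => F (x k))).
   unfold x. replace (-1 + INR (S m) * h) with ls.
   replace (-1 + INR 0 * h) with (-1) by (simpl; ring). lra.
   unfold h. field. lra. }
 assert (Hx : forall k, (k < S m)%nat -> -1 <= x k <= ls).
 { intros k Hk. unfold x. assert (0 <= INR k) by apply pos_INR.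
   assert (INR k <= INR (S m)) by (apply le_INR; lia).
   assert (INR k * h <= INR (S m) * h) by (apply Rmult_le_compat_r; lra).
   assert (INR (S m) * h = ls + 1) by (unfold h; field; lra). nra. }
 change (fun k => / (-1 + INR k * h - lam) * (F (-1 + INR (S k) * h) - F (-1 + INR k * h)))
   with (fun k => / (x k - lam) * (F (x (S k)) - F (x k))).
 split.
 - apply Rle_trans with (rsum (S m) (fun k => c * (F (x (S k)) - F (x k)))).
   rewrite rsum_scal, Htot. lra.
   apply rsum_le. intros i Hi. apply Rmult_le_compat_r. apply Hd. apply Hb, Hx, Hi.
 - apply Rle_trans with (rsum (S m) (fun k => C * (F (x (S k)) - F (x k)))).
   apply rsum_le. intros i Hi. apply Rmult_le_compat_r. apply Hd. apply Hb, Hx, Hi.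
   rewrite rsum_scal, Htot. lra.
Qed.

Lemma Un_cv_bounds u v c C : Un_cv u v -> (forall n, c <= u n <= C) -> c <= v <= C.
Proof. intros H Hb. split; apply Rnot_lt_le; intro Hl.
 - destruct (H (c - v)) as [N HN]; [lra|]. specialize (HN N (le_n N)).
   unfold R_dist in HN. specialize (Hb N). apply Rabs_def2 in HN. lra.
 - destruct (H (v - C)) as [N HN]; [lra|]. specialize (HN N (le_n N)).
   unfold R_dist in HN. specialize (Hb N). apply Rabs_def2 in HN. lra.
Qed.

Lemma s_bounds F ls lam v : is_cdf_endpoint F ls -> 0 < ls -> ls < lam ->
  stieltjes F ls lam v -> - / (lam - ls) <= v <= - / (lam + 1).
Proof.
 intros [Hm [_ [H0 [H1 _]]]] Hls Hl Hs. apply (Un_cv_bounds _ _ _ _ Hs).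
 intro m. apply RS_bounds; auto. apply H0; lra. apply H1; lra.
 intros x Hx. replace (/ (x - lam)) with (- / (lam - x)) by (field; lra).
 split; apply Ropp_le_contravar; apply Rinv_le_contravar; lra.
Qed.

Theorem corollary3p3
  (gamma : R) (p n : nat) (a omega b pi : nat -> R)
  (F : R -> R) (lstar : R) (s e : R -> R) :
  0 < gamma ->
  (forall i, (i < p)%nat -> 0 < a i /\ 0 < omega i) ->
  rsum p omega = 1 ->
  (forall j, (j < n)%nat -> 0 < b j /\ 0 < pi j) ->
  rsum n pi = 1 ->
  is_cdf_endpoint F lstar ->
  0 < lstar ->
  (forall lam, lstar < lam -> stieltjes F lstar lam (s lam)) ->
  (forall lam, lstar < lam -> continuity_pt e lam) ->
  (forall lam j, lstar < lam -> (j < n)%nat -> 1 + gamma * b j * e lam <> 0) ->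
  (forall lam i, lstar < lam -> (i < p)%nat ->
       a i * Gfun gamma n b pi (e lam) <> lam) ->
  (forall lam, lstar < lam ->
       s lam = rsum p (fun i => omega i / (a i * Gfun gamma n b pi (e lam) - lam))) ->
  (forall lam, lstar < lam ->
       e lam = rsum p (fun i => a i * omega i / (a i * Gfun gamma n b pi (e lam) - lam))) ->
  forall eps, 0 < eps ->
    exists M, lstar < M /\ forall lam, M < lam -> - eps < e lam < 0.
Proof.
 intros Hg Hp Hom Hn Hpi Hcdf Hls Hst _ _ Hne Hs He eps Heps.
 assert (Hp0 : (0 < p)%nat) by (destruct p; [simpl in Hom; lra | lia]).
 assert (Hn0 : (0 < n)%nat) by (destruct n; [simpl in Hpi; lra | lia]).
 set (A := rsum p a). set (W := rsum p (fun i => a i * omega i)).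
 set (B := rsum n b). set (B2 := rsum n (fun j => b j * pi j)).
 set (K := 2 * lstar + 1).
 assert (HA : 0 < A) by (apply rsum_pos; auto; intros; apply Hp; auto).
 assert (HW : 0 < W) by (apply rsum_pos; auto; intros i Hi; destruct (Hp i Hi); nra).
 assert (HB : 0 < B) by (apply rsum_pos; auto; intros; apply Hn; auto).
 assert (HB2 : 0 < B2) by (apply rsum_pos; auto; intros j Hj; destruct (Hn j Hj); nra).
 assert (HaA : forall i, (i < p)%nat -> a i <= A).
 { intros. apply rsum_term; auto. intros k Hk; left; apply Hp; auto. }
 assert (HbB : forall j, (j < n)%nat -> b j <= B).
 { intros. apply rsum_term; auto. intros k Hk; left; apply Hn; auto. }
 assert (HK : 0 < K) by (unfold K; lra).
 assert (HWe : 0 < 2 * W / eps) by (apply Rdiv_lt_0_compat; lra).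
 assert (H4 : 0 < 4 * A * K * gamma * B) by (repeat apply Rmult_lt_0_compat; lra).
 assert (H5 : 0 < 4 * A * B2) by (repeat apply Rmult_lt_0_compat; lra).
 exists (1 + 2 * lstar + 4 * A * K * gamma * B + 4 * A * B2 + 2 * W / eps).
 split. lra.
 intros lam Hlam.
 assert (Hl : lstar < lam) by lra.
 assert (Hl1 : 1 <= lam) by lra.
 set (g := Gfun gamma n b pi (e lam)).
 assert (Hxne : forall i, (i < p)%nat -> a i * g - lam <> 0).
 { intros i Hi. specialize (Hne lam i Hl Hi). fold g in Hne. lra. }
 destruct (Rle_dec (Rabs g) (lam / (2 * A))) as [Hc | Hc].
 -
   assert (Hx : forall i, (i < p)%nat -> a i * g - lam <= - (lam / 2)).
   { intros i Hi. destruct (Hp i Hi) as [Ha Ho].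
     assert (a i * g <= a i * Rabs g) by (apply Rmult_le_compat_l; [lra | apply Rle_abs]).
     assert (a i * Rabs g <= A * Rabs g) by (apply Rmult_le_compat_r; [apply Rabs_pos | apply HaA; auto]).
     assert (A * Rabs g <= A * (lam / (2 * A))) by (apply Rmult_le_compat_l; lra).
     replace (A * (lam / (2 * A))) with (lam / 2) in H1 by (field; lra). lra. }
   rewrite (He lam Hl). fold g. split.
   + apply Rlt_le_trans with (rsum p (fun i => - (2 / lam) * (a i * omega i))).
     rewrite rsum_scal. fold W.
     assert (2 * W / lam < eps).
     { apply (Rmult_lt_reg_r lam). lra.
       replace (2 * W / lam * lam) with (2 * W) by (field; lra).
       replace (2 * W) with (2 * W / eps * eps) by (field; lra).
       rewrite (Rmult_comm eps lam). apply Rmult_lt_compat_r; lra. }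
     replace (- (2 / lam) * W) with (- (2 * W / lam)) by (field; lra). lra.
     apply rsum_le. intros i Hi. destruct (Hp i Hi) as [Ha Ho].
     specialize (Hx i Hi).
     replace (a i * omega i / (a i * g - lam)) with (- (a i * omega i * / (- (a i * g - lam)))) by (field; lra).
     assert (/ (- (a i * g - lam)) <= / (lam / 2)) by (apply Rinv_le_contravar; lra).
     replace (/ (lam / 2)) with (2 / lam) in H by (field; lra).
     assert (0 < a i * omega i) by nra.
     assert (a i * omega i * / - (a i * g - lam) <= a i * omega i * (2 / lam)) by (apply Rmult_le_compat_l; lra).
     lra.
   + apply rsum_neg; auto. intros i Hi. destruct (Hp i Hi) as [Ha Ho].
     specialize (Hx i Hi). unfold Rdiv. assert (/ (a i * g - lam) < 0) by (apply Rinv_lt_0_compat; lra).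
     assert (0 < a i * omega i) by nra. nra.
 - apply Rnot_le_lt in Hc.
   assert (Hee := He lam Hl). fold g in Hee.
   assert (Hss := Hs lam Hl). fold g in Hss.
   assert (Hid : e lam * g = 1 + lam * s lam).
   { rewrite Hss, Hee, Rmult_comm, <- (rsum_scal p g), <- Hom, <- (rsum_scal p lam), <- rsum_plus.
     apply rsum_ext. intros i Hi. field. apply Hxne; auto. }
   destruct (s_bounds F lstar lam (s lam) Hcdf Hls Hl (Hst lam Hl)) as [Hs1 Hs2].
   set (q := 1 + lam * s lam) in Hid.
   set (u := / (lam - lstar)) in Hs1. set (v := / (lam + 1)) in Hs2.
   assert (Hu : u * (lam - lstar) = 1) by (unfold u; field; lra).
   assert (Hv : v * (lam + 1) = 1) by (unfold v; field; lra).
   assert (Hu0 : 0 < u) by (unfold u; apply Rinv_0_lt_compat; lra).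
   assert (Hv0 : 0 < v) by (unfold v; apply Rinv_0_lt_compat; lra).
   assert (Hq1 : q * lam <= K).
   { assert (lam * s lam <= lam * - v) by (apply Rmult_le_compat_l; lra).
     unfold q, K. nra. }
   assert (Hq2 : - K <= q * lam).
   { assert (lam * - u <= lam * s lam) by (apply Rmult_le_compat_l; lra).
     assert (u * lam <= 2) by nra.
     unfold q, K. nra. }
   assert (Hq : Rabs q * lam <= K).
   { unfold Rabs; destruct (Rcase_abs q); nra. }
   assert (Hab : Rabs (e lam) * Rabs g = Rabs q) by (rewrite <- Rabs_mult; f_equal; auto).
   assert (Hea : 0 <= Rabs (e lam)) by apply Rabs_pos.
   assert (Hel : Rabs (e lam) * (lam / (2 * A)) <= Rabs q).
   { rewrite <- Hab. apply Rmult_le_compat_l; lra. }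
   assert (Hel2 : Rabs (e lam) * lam <= 2 * A * Rabs q).
   { replace (Rabs (e lam) * lam) with (2 * A * (Rabs (e lam) * (lam / (2 * A)))) by (field; lra).
     apply Rmult_le_compat_l; lra. }
   assert (Hel3 : Rabs (e lam) * lam * lam <= 2 * A * K).
   { assert (Rabs (e lam) * lam * lam <= 2 * A * Rabs q * lam) by (apply Rmult_le_compat_r; lra).
     nra. }
   assert (HgB : gamma * B * Rabs (e lam) <= 1 / 2).
   { assert (0 < gamma * B) by nra.
     assert (gamma * B * (Rabs (e lam) * lam * lam) <= gamma * B * (2 * A * K)) by (apply Rmult_le_compat_l; lra).
     assert (Rabs (e lam) * lam * 1 <= Rabs (e lam) * lam * lam).
     { apply Rmult_le_compat_l; [apply Rmult_le_pos|]; lra. }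
     assert (gamma * B * (2 * A * K) = (4 * A * K * gamma * B) / 2) by field.
     assert (gamma * B * (Rabs (e lam) * lam * 1) <= gamma * B * (Rabs (e lam) * lam * lam)) by (apply Rmult_le_compat_l; lra).
     assert ((gamma * B * Rabs (e lam) - 1/2) * lam <= 0) by nra.
     destruct (Rle_dec (gamma * B * Rabs (e lam)) (1/2)); auto. nra. }
   assert (Hd : forall j, (j < n)%nat -> 1 / 2 <= 1 + gamma * b j * e lam).
   { intros j Hj. destruct (Hn j Hj) as [Hb Hpj]. specialize (HbB j Hj).
     assert (- Rabs (e lam) <= e lam) by (generalize (Rabs_Ropp (e lam)) (Rle_abs (- e lam)); lra).
     assert (gamma * b j * (- Rabs (e lam)) <= gamma * b j * e lam) by (apply Rmult_le_compat_l; nra).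
     assert (gamma * b j * Rabs (e lam) <= gamma * B * Rabs (e lam)).
     { apply Rmult_le_compat_r; [lra|]. apply Rmult_le_compat_l; lra. }
     lra. }
   assert (Hg0 : 0 <= g /\ g <= 2 * B2).
   { unfold g, Gfun. split.
     - rewrite <- (rsum_zero n). apply rsum_le. intros j Hj. destruct (Hn j Hj).
       specialize (Hd j Hj). unfold Rdiv; apply Rmult_le_pos; [nra | left; apply Rinv_0_lt_compat; lra].
     - unfold B2. rewrite <- rsum_scal. apply rsum_le. intros j Hj. destruct (Hn j Hj).
       specialize (Hd j Hj). unfold Rdiv.
       assert (/ (1 + gamma * b j * e lam) <= / (1/2)) by (apply Rinv_le_contravar; lra).
       replace (/ (1/2)) with 2 in H1 by field.
       assert (0 < b j * pi j) by nra. nra. }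
   rewrite Rabs_right in Hc by lra.
   assert (lam < 4 * A * B2).
   { assert (lam / (2 * A) * (2 * A) < 2 * B2 * (2 * A)) by (apply Rmult_lt_compat_r; lra).
     replace (lam / (2 * A) * (2 * A)) with lam in H by (field; lra). lra. }
   lra.
Qed.
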